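(* In $\mathbb{C}^3$ let $|l_a\rangle=(\sin\theta\cos\varphi_a,\sin\theta\sin\varphi_a,\cos\theta)$ for $a=1,\dots,5$, with $\varphi_a=4\pi a/5$ and $\cos\theta=5^{-1/4}$, so that $\langle l_a|l_{a\oplus1}\rangle=0$ (indices mod 5). Then the planes $\mathrm{span}\{|l_2\rangle,|l_3\rangle\}$ and $\mathrm{span}\{|l_4\rangle,|l_5\rangle\}$ intersect in a ray; let $|\psi_2\rangle$ be a unit vector on it, let $|\chi\rangle$ be a unit vector orthogonal to $|l_2\rangle,|l_3\rangle$ and $|\chi'\rangle$ a unit vector orthogonal to $|l_4\rangle,|l_5\rangle$. Then $|\langle l_1|\psi_2\rangle|^2=1-\frac{2}{\sqrt5}>0$, while every function $v$ from the set of rays $\{|l_1\rangle,\dots,|l_5\rangle,|\chi\rangle,|\chi'\rangle,|\psi_2\rangle\}$ to $\{0,1\}$ which assigns value 1 to exactly one member of every orthogonal triple in this set, assigns value 1 to at most one member of every orthogonal pair in this set, and satisfies $v(|\psi_2\rangle)=1$, must satisfy $v(|l_1\rangle)=0$. *)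

(* Defs.v *)
From HB Require Import structures.
From mathcomp Require Import all_boot all_order all_algebra.
From mathcomp Require Import complex.
From mathcomp Require Import all_classical all_reals.
From mathcomp Require Import exp trigo.
Set Implicit Arguments. Unset Strict Implicit. Unset Printing Implicit Defensive.
Import Order.TTheory GRing.Theory Num.Theory.
Local Open Scope ring_scope.
Local Open Scope complex_scope.

Section Defs.
Variable R : realType.
Notation C := (R[i]).

Definition inner (u w : 'rV[C]_3) : C := \sum_(i < 3) (u 0 i)^* * w 0 i.

Definition theta : R := acos (5 `^ (- (1 / 4))).
Definition phi (a : nat) : R := 4 * pi * a%:R / 5.

Definition lvec (a : nat) : 'rV[C]_3 :=
  \row_(i < 3) ((if i == 0 :> nat then sin theta * cos (phi a)
                 else if i == 1 :> nat then sin theta * sin (phi a)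
                 else cos theta)%:C).

(* the ray (one-dimensional subspace) spanned by u, as a canonical row space *)
Definition ray (u : 'rV[C]_3) : 'M[C]_3 := <<u>>%MS.

Definition span2 (u w : 'rV[C]_3) : 'M[C]_3 := (<<u>> + <<w>>)%MS.

Definition unit_vec (u : 'rV[C]_3) : Prop := inner u u = 1.

Definition KS_valuation (S : seq 'rV[C]_3) (v : 'M[C]_3 -> bool) : Prop :=
  (forall x y z, x \in S -> y \in S -> z \in S ->
     inner x y = 0 -> inner y z = 0 -> inner x z = 0 ->
     (v (ray x) + v (ray y) + v (ray z) = 1)%N) /\
  (forall x y, x \in S -> y \in S -> inner x y = 0 ->
     ~~ (v (ray x) && v (ray y))).

End Defs.

(* Main.v *)
Require Import Defs.
From HB Require Import structures.
From mathcomp Require Import all_boot all_order all_algebra.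
From mathcomp Require Import complex.
From mathcomp Require Import all_classical all_reals.
From mathcomp Require Import exp trigo.
From mathcomp Require Import ring lra zify.
Import Order.TTheory GRing.Theory Num.Theory.
Local Open Scope ring_scope.
Local Open Scope complex_scope.
Section S.
Variable R : realType.
Notation C := (R[i]).
Let r := Num.sqrt (5:R).
Lemma r2 : r ^+ 2 = 5. Proof. by rewrite sqr_sqrtr. Qed.
Lemma r_gt2 : 2 < r.
Proof. have := r2; have : 0 <= r by exact: sqrtr_ge0. nra. Qed.

Let c := cos (theta R).
Let s := sin (theta R).
Lemma c2 : c ^+ 2 = r^-1.
Proof.
have h0 : 0 <= (5:R) `^ (- (1/4)) by exact: powR_ge0.
have hsq : ((5:R) `^ (- (1/4))) ^+ 2 = r^-1.
  rewrite -powR_mulrn // -powRrM.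
  have -> : - (1 / 4) * 2%:R = - (2^-1 : R) by field.
  by rewrite powRN powR12_sqrt.
have hc : c = (5:R) `^ (- (1/4)).
  rewrite /c /theta acosK // in_itv /=.
  have : r^-1 <= 1 by rewrite invr_le1 ?unitfE; have := r_gt2; lra.
  rewrite -hsq => h1; apply/andP; split; nra.
by rewrite hc.
Qed.
Lemma s2 : s ^+ 2 = 1 - r^-1.
Proof. by rewrite /s sin2cos2 -/c c2. Qed.


Lemma rank_inj (F : fieldType) m n (M : 'M[F]_(m, n)) :
  (forall x : 'rV_m, x *m M = 0 -> x = 0) -> \rank M = m.
Proof.
move=> H; suff: row_free M by move/eqP.
rewrite -kermx_eq0 -submx0; apply/row_subP => i.
have /sub_kermxP/H -> := row_sub i (kermx M).
exact: sub0mx.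
Qed.

Lemma innerDl (u u' w : 'rV[C]_3) : inner (u + u') w = inner u w + inner u' w.
Proof. by rewrite /inner -big_split; apply: eq_bigr => i _; rewrite mxE rmorphD mulrDl. Qed.
Lemma innerDr (u w w' : 'rV[C]_3) : inner u (w + w') = inner u w + inner u w'.
Proof. by rewrite /inner -big_split; apply: eq_bigr => i _; rewrite mxE mulrDr. Qed.
Lemma innerZl a (u w : 'rV[C]_3) : inner (a *: u) w = Num.conj a * inner u w.
Proof. by rewrite /inner mulr_sumr; apply: eq_bigr => i _; rewrite mxE rmorphM mulrA. Qed.
Lemma innerZr a (u w : 'rV[C]_3) : inner u (a *: w) = a * inner u w.
Proof. by rewrite /inner mulr_sumr; apply: eq_bigr => i _; rewrite mxE mulrCA. Qed.

Lemma inner0r (u : 'rV[C]_3) : inner u 0 = 0.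
Proof. by have := innerZr 0 u 0; rewrite scale0r mul0r. Qed.

Lemma mul3 (x : 'rV[C]_3) (f : 'I_3 -> 'rV[C]_3) :
  x *m (\matrix_(i < 3) f i) = x 0 0 *: f 0 + x 0 1 *: f 1 + x 0 2%:R *: f 2%:R.
Proof.
rewrite mulmx_sum_row !big_ord_recr big_ord0 /= add0r !rowK.
congr (x 0 _ *: f _ + x 0 _ *: f _ + x 0 _ *: f _); exact/val_inj.
Qed.
Lemma mul2 (x : 'rV[C]_2) (f : 'I_2 -> 'rV[C]_3) :
  x *m (\matrix_(i < 2) f i) = x 0 0 *: f 0 + x 0 1 *: f 1.
Proof.
rewrite mulmx_sum_row !big_ord_recr big_ord0 /= add0r !rowK.
congr (x 0 _ *: f _ + x 0 _ *: f _); exact/val_inj.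
Qed.


Let x := pi / 5 : R.
Lemma cos_x : cos x = (1 + r) / 4.
Proof.
set q := cos x.
have hq : 0 < q.
  apply: cos_gt0_pihalf; have hp := @pi_gt0 R; rewrite /x; apply/andP; split; lra.
have h3 : x *+ 2 + x = pi - x *+ 2 by rewrite /x !mulr2n; field.
have := congr1 cos h3.
rewrite cosB cosD cospi sinpi cos_mulr2n sin_mulr2n => e.
have es : sin x ^+ 2 = 1 - q ^+ 2 by rewrite sin2cos2.
have e2 : (q + 1) * (4 * q ^+ 2 - 2 * q - 1) = 0.
  rewrite -/q in e; nra.
have e3 : 4 * q ^+ 2 - 2 * q - 1 = 0.
  move: e2 => /eqP; rewrite mulf_eq0 => /orP [|/eqP //]; lra.
have : (q - (1 + r) / 4) * (q - (1 - r) / 4) = 0.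
  have := r2; nra.
move/eqP; rewrite mulf_eq0 => /orP [/eqP|/eqP]; first lra.
have := r_gt2; lra.
Qed.

Definition gv (d : nat) : R :=
  if d == 0%N then 1 else if (d == 1%N) || (d == 4%N) then 0 else (r - 1) / 2.

Lemma cos2x : cos (x *+ 2) = (r - 1) / 4.
Proof. rewrite cos_mulr2n cos_x; have := r2; lra. Qed.
Lemma cos4x : cos (x *+ 2 *+ 2) = - (1 + r) / 4.
Proof. rewrite cos_mulr2n cos2x; have := r2; lra. Qed.
Lemma cos8x : cos (x *+ 2 *+ 2 *+ 2) = (r - 1) / 4.
Proof. rewrite cos_mulr2n cos4x; have := r2; lra. Qed.
Lemma cos16x : cos (x *+ 2 *+ 2 *+ 2 *+ 2) = - (1 + r) / 4.
Proof. rewrite cos_mulr2n cos8x; have := r2; lra. Qed.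
Lemma cos12x : cos ((x + pi) *+ 2) = (r - 1) / 4.
Proof. rewrite cos_mulr2n cosDpi cos_x; have := r2; lra. Qed.

Lemma cos_phi d : (d <= 4)%N -> s ^+ 2 * cos (phi R d) + c ^+ 2 = gv d.
Proof.
have hr := r_gt2; have hr2 := r2.
have rV : r * r^-1 = 1 by rewrite mulfV //; lra.
rewrite s2 c2 /gv.
case: d => [|[|[|[|[|//]]]]] _ /=.
- by rewrite /phi mulr0 mul0r cos0; lra.
- have -> : phi R 1 = x *+ 2 *+ 2 by rewrite /phi /x !mulr2n; field.
  rewrite cos4x; nra.
- have -> : phi R 2 = x *+ 2 *+ 2 *+ 2 by rewrite /phi /x !mulr2n; field.
  rewrite cos8x; nra.
- have -> : phi R 3 = (x + pi) *+ 2 by rewrite /phi /x !mulr2n; field.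
  rewrite cos12x; nra.
- have -> : phi R 4 = x *+ 2 *+ 2 *+ 2 *+ 2 by rewrite /phi /x !mulr2n; field.
  rewrite cos16x; nra.
Qed.

Lemma inner_lvec a b : inner (lvec R a) (lvec R b) = (s ^+ 2 * cos (phi R a - phi R b) + c ^+ 2)%:C.
Proof.
rewrite /inner !big_ord_recr big_ord0 /= !mxE /=.
have cr : forall y : R, Num.conj (y%:C) = y%:C.
  by move=> y; apply: conj_Creal; apply/complex_realP; exists y.
rewrite !cr add0r.
rewrite -!rmorphM -!rmorphD; congr (_%:C).
rewrite cosB -/s -/c; ring.
Qed.

Lemma inner_l a b : (1 <= a <= 5)%N -> (1 <= b <= 5)%N ->
  inner (lvec R a) (lvec R b) = (gv (if (b <= a)%N then (a - b)%N else (b - a)%N))%:C.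
Proof.
move=> /andP[a1 a5] /andP[b1 b5]; rewrite inner_lvec.
case: leqP => hab.
- rewrite -cos_phi; last by lia.
  by rewrite /phi natrB //; congr (_ %:C); congr (_ * cos _ + _); field.
- rewrite -cos_phi; last by lia.
  rewrite /phi natrB ?(ltnW hab) //; congr (_ %:C); rewrite -cosN; by congr (_ * cos _ + _); field.
Qed.

Let kk := (r - 1) / 2.
Let K := kk%:C.

Ltac il := rewrite inner_l //= /gv /= ?rmorph0 ?rmorph1 -/kk -/K.

Lemma K_real : Num.conj K = K.
Proof. by apply: conj_Creal; apply/complex_realP; exists kk. Qed.

Lemma K_neq0 : K != 0.
Proof. rewrite fmorph_eq0 /kk; have := r_gt2; rewrite -subr_eq0; apply: contraTN => /eqP; lra. Qed.

Lemma K2_neq1 : 1 - K ^+ 2 != 0.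
Proof.
have -> : 1 - K ^+ 2 = (1 - kk ^+ 2)%:C by rewrite rmorphB rmorphXn rmorph1.
rewrite fmorph_eq0 /kk.
have := r_gt2; have := r2; rewrite subr_eq0 => h1 h2; apply/eqP => e; nra.
Qed.

Lemma decomp (u w p : 'rV[C]_3) : (p <= <<u>> + <<w>>)%MS ->
  exists a b, p = a *: u + b *: w.
Proof.
rewrite (adds_eqmx (genmxE u) (genmxE w)) => /sub_addsmxP [[D1 D2] /= ->].
exists (D1 0 0), (D2 0 0).
by rewrite {1}(mx11_scalar D1) {1}(mx11_scalar D2) !mul_scalar_mx.
Qed.

Lemma sub_gen (u : 'rV[C]_3) : (u <= <<u>>)%MS.
Proof. by rewrite genmxE. Qed.

Lemma rank_span2 a b : (1 <= a <= 5)%N -> (1 <= b <= 5)%N ->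
  inner (lvec R a) (lvec R a) = 1 -> inner (lvec R b) (lvec R b) = 1 ->
  inner (lvec R a) (lvec R b) = 0 -> inner (lvec R b) (lvec R a) = 0 ->
  \rank (span2 (lvec R a) (lvec R b)) = 2%N.
Proof.
move=> ha hb aa bb ab ba.
apply/eqP; rewrite eqn_leq; apply/andP; split.
  rewrite /span2; apply: leq_trans (mxrank_adds_leqif _ _) _.
  by rewrite !genmxE (leq_add (rank_leq_row _) (rank_leq_row _)).
pose M := \matrix_(i < 2) nth 0 [:: lvec R a; lvec R b] i.
have hM : \rank M = 2%N.
  apply/rank_inj => y; rewrite mul2 /= => e.
  have e1 := congr1 (inner (lvec R a)) e.
  have e2 := congr1 (inner (lvec R b)) e.
  have z0 : inner (lvec R a) 0 = 0 /\ inner (lvec R b) 0 = 0.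
    by split; rewrite inner0r.
  case: z0 => za zb.
  rewrite !innerDr !innerZr ?aa ?ab ?ba ?bb ?za ?zb ?mulr0 ?mulr1 ?addr0 ?add0r in e1 e2.
  apply/rowP => j; rewrite mxE; case: j => [[|[|//]]] ? /=.
  - by rewrite -e1; congr (y 0 _); apply/val_inj.
  - by rewrite -e2; congr (y 0 _); apply/val_inj.
rewrite -[X in (X <= _)%N]hM; apply: mxrankS; apply/row_subP => i; rewrite rowK /span2.
case: i => [[|[|//]]] ? /=.
- exact: submx_trans (sub_gen _) (addsmxSl _ _).
- exact: submx_trans (sub_gen _) (addsmxSr _ _).
Qed.

Lemma rank_sum : \rank (span2 (lvec R 2) (lvec R 3) + span2 (lvec R 4) (lvec R 5))%MS = 3%N.
Proof.
apply/eqP; rewrite eqn_leq rank_leq_col /=.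
pose M := \matrix_(i < 3) nth 0 [:: lvec R 2; lvec R 3; lvec R 4] i.
have hM : \rank M = 3%N.
  apply/rank_inj => y; rewrite mul3 /= => e.
  have e1 := congr1 (inner (lvec R 2)) e.
  have e2 := congr1 (inner (lvec R 3)) e.
  have e3 := congr1 (inner (lvec R 4)) e.
  have z0 : inner (lvec R 2) 0 = 0 /\ inner (lvec R 3) 0 = 0 /\ inner (lvec R 4) 0 = 0.
    by split; [|split]; rewrite inner0r.
  case: z0 => z2 [z3 z4].
  rewrite !innerDr !innerZr z2 z3 z4 in e1 e2 e3.
  move: e1 e2 e3; il; il; il; il; il; il; il; il; il.
  rewrite !mulr0 !mulr1 !addr0 !add0r => e1 e2 e3.
  have hx0 : y 0 0 = 0.
    have : y 0 0 * (1 - K ^+ 2) = 0.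
      have h3 : y 0 2%:R = - (y 0 0 * K) by apply/eqP; rewrite -addr_eq0 addrC e3.
      by rewrite h3 in e1; rewrite -e1; ring.
    by move/eqP; rewrite mulf_eq0 (negbTE K2_neq1) orbF => /eqP.
  have hx2 : y 0 2%:R = 0 by rewrite hx0 mul0r add0r in e3.
  apply/rowP => j; rewrite mxE; case: j => [[|[|[|//]]]] ? /=.
  - by rewrite -hx0; congr (y 0 _); apply/val_inj.
  - by rewrite -e2; congr (y 0 _); apply/val_inj.
  - by rewrite -hx2; congr (y 0 _); apply/val_inj.
rewrite -[X in (X <= _)%N]hM; apply: mxrankS; apply/row_subP => i; rewrite rowK /span2.
case: i => [[|[|[|//]]]] ? /=.
- exact: submx_trans (submx_trans (sub_gen _) (addsmxSl _ _)) (addsmxSl _ _).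
- exact: submx_trans (submx_trans (sub_gen _) (addsmxSr _ _)) (addsmxSl _ _).
- exact: submx_trans (submx_trans (sub_gen _) (addsmxSl _ _)) (addsmxSr _ _).
Qed.

Lemma rCM (y z : R) : (y * z)%:C = y%:C * z%:C. Proof. exact: rmorphM. Qed.
Lemma rCD (y z : R) : (y + z)%:C = y%:C + z%:C. Proof. exact: rmorphD. Qed.
Lemma rC1 : (1 : R)%:C = 1. Proof. by []. Qed.
Lemma rCX (y : R) n : (y ^+ n)%:C = y%:C ^+ n. Proof. exact: rmorphXn. Qed.

Lemma real_id : kk ^+ 4 = (1 - 2 / r) * (1 + kk ^+ 2).
Proof.
have hr := r_gt2; have hr2 := r2.
have rn : r != 0 by apply/eqP => e; rewrite e in hr; lra.
have rinv : r^-1 = r / 5 by apply: (mulfI rn); rewrite mulfV // mulrA -expr2 hr2 mulfV // pnatr_eq0.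
have r3 : r ^+ 3 = 5 * r by rewrite exprS hr2 mulrC.
have r4 : r ^+ 4 = 25 by rewrite (exprM r 2 2) hr2; lra.
rewrite /kk rinv; lra.
Qed.

Lemma pos_lemma : 0 < 1 - 2 / r.
Proof.
have hr := r_gt2; have hr2 := r2.
have rn : r != 0 by apply/eqP => e; rewrite e in hr; lra.
have rinv : r^-1 = r / 5 by apply: (mulfI rn); rewrite mulfV // mulrA -expr2 hr2 mulfV // pnatr_eq0.
rewrite rinv; nra.
Qed.

Ltac memt := rewrite !inE eqxx ?orbT.

Lemma main_sec :
  (forall a : nat, (1 <= a <= 5)%N ->
     inner (lvec R a) (lvec R (a %% 5).+1) = 0) /\
  \rank (span2 (lvec R 2) (lvec R 3) :&: span2 (lvec R 4) (lvec R 5))%MS = 1%N /\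
  (forall psi2 chi chi' : 'rV[R[i]]_3,
     (psi2 <= span2 (lvec R 2) (lvec R 3) :&: span2 (lvec R 4) (lvec R 5))%MS ->
     unit_vec psi2 ->
     unit_vec chi -> inner (lvec R 2) chi = 0 -> inner (lvec R 3) chi = 0 ->
     unit_vec chi' -> inner (lvec R 4) chi' = 0 -> inner (lvec R 5) chi' = 0 ->
     `|inner (lvec R 1) psi2| ^+ 2 = (1 - 2 / Num.sqrt 5)%:C /\
     0 < 1 - 2 / Num.sqrt (5 : R) /\
     (forall v : 'M[R[i]]_3 -> bool,
        KS_valuation [:: lvec R 1; lvec R 2; lvec R 3; lvec R 4; lvec R 5;
                         chi; chi'; psi2] v ->
        v (ray psi2) ->
        v (ray (lvec R 1)) = false)).
Proof.
split.
  by case=> [|[|[|[|[|[|a]]]]]] //= _; il.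
split.
  have := mxrank_sum_cap (span2 (lvec R 2) (lvec R 3)) (span2 (lvec R 4) (lvec R 5)).
  rewrite rank_sum !rank_span2 //; try by il.
  by move/eqP; rewrite -(addn1 3) eqn_add2l => /eqP.
move=> psi2 chi chi' hpsi upsi uchi h2c h3c uchi' h4c h5c.
move: hpsi; rewrite sub_capmx => /andP [/decomp [al [be E1]] /decomp [ga [de E2]]].
have i1a : inner (lvec R 1) psi2 = be * K by rewrite E1 innerDr !innerZr; il; il; rewrite mulr0 add0r.
have i1b : inner (lvec R 1) psi2 = ga * K by rewrite E2 innerDr !innerZr; il; il; rewrite mulr0 addr0.
have i4a : inner (lvec R 4) psi2 = al * K by rewrite E1 innerDr !innerZr; il; il; rewrite mulr0 addr0.
have i4b : inner (lvec R 4) psi2 = ga by rewrite E2 innerDr !innerZr; il; il; rewrite mulr0 mulr1 addr0.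
have hbg : be = ga by apply: (mulIf K_neq0); rewrite -i1a -i1b.
have hb : be = al * K by rewrite hbg -i4b i4a.
have hu : Num.conj al * al + Num.conj be * be = 1.
  move: upsi; rewrite /unit_vec {1}E1 innerDl !innerZl E1 !innerDr !innerZr.
  by il; il; il; il; rewrite !mulr0 !mulr1 addr0 add0r.
have hr := r_gt2; have hr2 := r2.
have cM : forall a b : C, Num.conj (a * b) = Num.conj a * Num.conj b by move=> ? ?; rewrite rmorphM.
split.
  rewrite normCK i1a hb !cM K_real.
  have hA : al * Num.conj al * (1 + K ^+ 2) = 1.
    by rewrite -[RHS]hu hb cM K_real; ring.
  have hreal : K ^+ 4 = (1 - 2 / r)%:C * (1 + K ^+ 2).
    by rewrite /K -rC1 -!rCX -rCD -rCM real_id.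
  transitivity (al * Num.conj al * K ^+ 4); first by ring.
  rewrite hreal; transitivity ((1 - 2 / r)%:C * (al * Num.conj al * (1 + K ^+ 2))); first by ring.
  by rewrite hA mulr1.
split.
  exact: pos_lemma.
move=> v [hT hP] vpsi.
have pc : inner psi2 chi = 0 by rewrite E1 innerDl !innerZl h2c h3c !mulr0 addr0.
have pc' : inner psi2 chi' = 0 by rewrite E2 innerDl !innerZl h4c h5c !mulr0 addr0.
have mem : forall y, y \in [:: lvec R 1; lvec R 2; lvec R 3; lvec R 4; lvec R 5; chi; chi'; psi2] ->
  y \in [:: lvec R 1; lvec R 2; lvec R 3; lvec R 4; lvec R 5; chi; chi'; psi2] by [].
have H1 : ~~ (v (ray psi2) && v (ray chi)) by apply: hP pc; memt.
have H2 : ~~ (v (ray psi2) && v (ray chi')) by apply: hP pc'; memt.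
have H3 : (v (ray (lvec R 2)) + v (ray (lvec R 3)) + v (ray chi) = 1)%N.
  by apply: hT h3c h2c; (try by memt); il.
have H4 : (v (ray (lvec R 4)) + v (ray (lvec R 5)) + v (ray chi') = 1)%N.
  by apply: hT h5c h4c; (try by memt); il.
have H5 : ~~ (v (ray (lvec R 1)) && v (ray (lvec R 2))) by apply: hP; (try by memt); il.
have H6 : ~~ (v (ray (lvec R 5)) && v (ray (lvec R 1))) by apply: hP; (try by memt); il.
have H7 : ~~ (v (ray (lvec R 3)) && v (ray (lvec R 4))) by apply: hP; (try by memt); il.
move: H1 H2 H3 H4 H5 H6 H7; rewrite vpsi /=.
case: (v (ray chi)); case: (v (ray chi')); case: (v (ray (lvec R 1)));
  case: (v (ray (lvec R 2))); case: (v (ray (lvec R 3)));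
  case: (v (ray (lvec R 4))); case: (v (ray (lvec R 5))) => //.
Qed.

End S.

Theorem mainTheorem6 (R : realType) :
  (forall a : nat, (1 <= a <= 5)%N ->
     inner (lvec R a) (lvec R (a %% 5).+1) = 0) /\
  \rank (span2 (lvec R 2) (lvec R 3) :&: span2 (lvec R 4) (lvec R 5))%MS = 1%N /\
  (forall psi2 chi chi' : 'rV[R[i]]_3,
     (psi2 <= span2 (lvec R 2) (lvec R 3) :&: span2 (lvec R 4) (lvec R 5))%MS ->
     unit_vec psi2 ->
     unit_vec chi -> inner (lvec R 2) chi = 0 -> inner (lvec R 3) chi = 0 ->
     unit_vec chi' -> inner (lvec R 4) chi' = 0 -> inner (lvec R 5) chi' = 0 ->
     `|inner (lvec R 1) psi2| ^+ 2 = (1 - 2 / Num.sqrt 5)%:C /\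
     0 < 1 - 2 / Num.sqrt (5 : R) /\
     (forall v : 'M[R[i]]_3 -> bool,
        KS_valuation [:: lvec R 1; lvec R 2; lvec R 3; lvec R 4; lvec R 5;
                         chi; chi'; psi2] v ->
        v (ray psi2) ->
        v (ray (lvec R 1)) = false)).
Proof. exact: main_sec. Qed.
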